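(* Let $R$ be a ring and $\mathfrak a\in\mathrm{Ass}(R)$. Then: (1) $\mathrm{Den}(R,\mathfrak a)$ is an ordered abelian semigroup under $S_1S_2:=\langle S_1,S_2\rangle$ (the multiplicative subsemigroup of $R$ generated by $S_1,S_2$): for $S_1,S_2,S_3\in\mathrm{Den}(R,\mathfrak a)$, $S_1S_2\in\mathrm{Den}(R,\mathfrak a)$, $S_1S_2=S_2S_1$, and $S_1\subseteq S_2$ implies $S_1S_3\subseteq S_2S_3$; (2) $S_{\mathfrak a}(R):=\bigcup_{S\in\mathrm{Den}(R,\mathfrak a)}S$ belongs to $\mathrm{Den}(R,\mathfrak a)$ and is its largest element; (3) for any non-empty family $S_i\in\mathrm{Den}(R,\mathfrak a)$, $i\in I$, the set $\langle S_i\mid i\in I\rangle:=\bigcup_{\emptyset\ne J\subseteq I,|J|<\infty}\prod_{j\in J}S_j$ belongs to $\mathrm{Den}(R,\mathfrak a)$ and is the least upper bound of $\{S_i\}_{i\in I}$ in $\mathrm{Den}(R,\mathfrak a)$.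
   Context: Rings are associative with $1$. A multiplicatively closed subset $S$ ($1\in S$, $0\notin S$) is a left (resp. right) Ore set if $Sr\cap Rs\neq\emptyset$ (resp. $rS\cap sR\neq\emptyset$) for all $r\in R,s\in S$. A left denominator set is a left Ore set $S$ such that $rs=0$ ($s\in S$) implies $tr=0$ for some $t\in S$; a right denominator set is defined symmetrically. $\mathrm{Den}(R)$ is the set of subsets that are both left and right denominator sets; for $S\in\mathrm{Den}(R)$, $\mathrm{ass}(S):=\{r\mid sr=0\text{ for some }s\in S\}=\{r\mid rs=0\text{ for some }s\in S\}$. $\mathrm{Ass}(R):=\{\mathrm{ass}(S)\mid S\in\mathrm{Den}(R)\}$ and $\mathrm{Den}(R,\mathfrak a):=\{S\in\mathrm{Den}(R)\mid\mathrm{ass}(S)=\mathfrak a\}$. *)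

(* Defs.v *)
From mathcomp Require Import all_boot all_algebra.
Set Implicit Arguments. Unset Strict Implicit. Unset Printing Implicit Defensive.
Import GRing.Theory.
Local Open Scope ring_scope.

Definition rset (R : Type) := R -> Prop.

Definition subset_of (R : Type) (A B : rset R) : Prop := forall x, A x -> B x.
Definition seteq (R : Type) (A B : rset R) : Prop := forall x, A x <-> B x.

Section Den.
Variable R : pzRingType.

Definition mult_closed (S : rset R) : Prop :=
  [/\ S 1, ~ S 0 & forall x y, S x -> S y -> S (x * y)].

Definition left_ore (S : rset R) : Prop :=
  mult_closed S /\
  forall r s, S s -> exists s' r', S s' /\ s' * r = r' * s.

Definition right_ore (S : rset R) : Prop :=
  mult_closed S /\
  forall r s, S s -> exists s' r', S s' /\ r * s' = s * r'.

Definition left_den (S : rset R) : Prop :=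
  left_ore S /\ forall r s, S s -> r * s = 0 -> exists t, S t /\ t * r = 0.

Definition right_den (S : rset R) : Prop :=
  right_ore S /\ forall r s, S s -> s * r = 0 -> exists t, S t /\ r * t = 0.

Definition Den (S : rset R) : Prop := left_den S /\ right_den S.

Definition ass (S : rset R) : rset R := fun r => exists s, S s /\ s * r = 0.

Definition in_Ass (a : rset R) : Prop := exists S, Den S /\ seteq (ass S) a.

Definition Den_a (a : rset R) (S : rset R) : Prop := Den S /\ seteq (ass S) a.

Inductive gen (T : rset R) : R -> Prop :=
| gen_base x : T x -> gen T x
| gen_mul x y : gen T x -> gen T y -> gen T (x * y).

Definition prodDen (S1 S2 : rset R) : rset R := gen (fun x => S1 x \/ S2 x).

Definition genFam (I : Type) (Sf : I -> rset R) : rset R :=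
  gen (fun x => exists i, Sf i x).

Definition S_a (a : rset R) : rset R := fun x => exists S, Den_a a S /\ S x.

End Den.

(* Main.v *)
Require Import Defs.
From mathcomp Require Import all_boot all_algebra.
Import GRing.Theory.
Local Open Scope ring_scope.
Set Implicit Arguments.
Unset Strict Implicit.

Section Aux.
Variable R : pzRingType.
Variable a : rset R.

Lemma den1 (S : rset R) : Den_a a S -> S 1.
Proof. by move=> [[[[[]]]]]. Qed.

Lemma denM (S : rset R) : Den_a a S -> forall x y, S x -> S y -> S (x * y).
Proof. by move=> [[[[[]]]]]. Qed.

Lemma regL (S : rset R) : Den_a a S -> forall s r, S s -> a (s * r) -> a r.
Proof.
move=> [[[[[S1 S0 SM] Ol] Al] [[_ Or] Ar]] E] s r Ss /E [t [St Ht]].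
apply/E; exists (t * s); split; first by apply: SM.
by rewrite -mulrA.
Qed.

Lemma regR (S : rset R) : Den_a a S -> forall s r, S s -> a (r * s) -> a r.
Proof.
move=> [[[[[S1 S0 SM] Ol] Al] [[_ Or] Ar]] E] s r Ss /E [t [St Ht]].
rewrite mulrA in Ht.
have [u [Su Hu]] := Al _ _ Ss Ht.
apply/E; exists (u * t); split; first by apply: SM.
by rewrite -mulrA.
Qed.

Lemma gen_sub (U V : rset R) : (forall x, U x -> gen V x) ->
  forall x, gen U x -> gen V x.
Proof.
move=> H x; elim=> [y /H //| y z _ Hy _ Hz]; exact: gen_mul.
Qed.

Lemma gen_closed (U T : rset R) : (forall x, U x -> T x) ->
  (forall x y, T x -> T y -> T (x * y)) -> forall x, gen U x -> T x.
Proof.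
move=> H M x; elim=> [y /H //| y z _ Hy _ Hz]; exact: M.
Qed.

Lemma Den_a_ext (S T : rset R) : (forall x, S x <-> T x) -> Den_a a S -> Den_a a T.
Proof.
move=> E [[[[[S1 S0 SM] Ol] Al] [[_ Or] Ar]] Ea].
have mc : mult_closed T.
  split; [by apply/E | by move/E | by move=> x y /E hx /E hy; apply/E; apply: SM].
split; [split; [split; [split|]|split; [split|]]|].
- exact: mc.
- move=> r s /E Ss; have [s' [r' [H1 H2]]] := Ol r s Ss.
  by exists s', r'; split => //; apply/E.
- move=> r s /E Ss H; have [t [H1 H2]] := Al r s Ss H.
  by exists t; split => //; apply/E.
- exact: mc.
- move=> r s /E Ss; have [s' [r' [H1 H2]]] := Or r s Ss.
  by exists s', r'; split => //; apply/E.
- move=> r s /E Ss H; have [t [H1 H2]] := Ar r s Ss H.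
  by exists t; split => //; apply/E.
- move=> x; split.
    by move=> [s [/E Ss H]]; apply/Ea; exists s.
  by move/Ea=> [s [Ss H]]; exists s; split => //; apply/E.
Qed.

Lemma gen_Den_a (U : rset R) :
  (forall x, U x -> exists S, Den_a a S /\ S x /\ subset_of S U) ->
  (exists x, U x) -> Den_a a (gen U).
Proof.
move=> HU [x0 /HU [S0 [D0 [_ sub0]]]].
have gU : forall x, U x -> gen U x by move=> x; apply: gen_base.
have one : gen U 1 by apply: gU; apply: sub0; exact: (den1 D0).
have regl : forall g, gen U g -> forall r, a (g * r) -> a r.
  move=> g; elim=> [y /HU [S [D [Sy _]]] | y z _ Hy _ Hz] r Hr.
    exact: (regL D Sy Hr).
  by apply: Hz; apply: Hy; rewrite mulrA.
have regr : forall g, gen U g -> forall r, a (r * g) -> a r.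
  move=> g; elim=> [y /HU [S [D [Sy _]]] | y z _ Hy _ Hz] r Hr.
    exact: (regR D Sy Hr).
  by apply: Hy; apply: Hz; rewrite -mulrA.
move: (D0) => [ [[[[S1 S00 SM] Ol] Al] [[_ Or] Ar]] E0].
have a0 : a 0 by apply/E0; exists 1; split => //; rewrite mulr0.
have no0 : ~ gen U 0.
  move=> H; have := regl _ H 1; rewrite mul0r => /(_ a0) /E0 [s [Ss]].
  by rewrite mulr1 => Hs; rewrite Hs in Ss.
have mc : mult_closed (gen U) by split => // x y; apply: gen_mul.
have orel : forall g, gen U g -> forall r, exists s' r', gen U s' /\ s' * r = r' * g.
  move=> g; elim=> [y /HU [S [D [Sy sub]]] | y z _ Hy _ Hz] r.
    move: D => [[[[_ O] _] _] _].
    have [s' [r' [H1 H2]]] := O r y Sy.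
    by exists s', r'; split => //; apply: gU; apply: sub.
  have [s2 [r2 [H1 H2]]] := Hz r.
  have [s1 [r1 [H3 H4]]] := Hy r2.
  exists (s1 * s2), r1; split; first exact: gen_mul.
  by rewrite -mulrA H2 mulrA H4 mulrA.
have orer : forall g, gen U g -> forall r, exists s' r', gen U s' /\ r * s' = g * r'.
  move=> g; elim=> [y /HU [S [D [Sy sub]]] | y z _ Hy _ Hz] r.
    move: D => [[_ [[_ O] _]] _].
    have [s' [r' [H1 H2]]] := O r y Sy.
    by exists s', r'; split => //; apply: gU; apply: sub.
  have [s1 [r1 [H1 H2]]] := Hy r.
  have [s2 [r2 [H3 H4]]] := Hz r1.
  exists (s1 * s2), r2; split; first exact: gen_mul.
  by rewrite mulrA H2 -mulrA H4 mulrA.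
split; [split; [split; [split|]|split; [split|]]|].
- exact: mc.
- by move=> r s Hs; apply: orel.
- move=> r s Hs H.
  have /E0 [t [St Ht]] : a r by apply: (regr _ Hs); rewrite H.
  by exists t; split => //; apply: gU; apply: sub0.
- exact: mc.
- by move=> r s Hs; apply: orer.
- move=> r s Hs H.
  have /E0 [t [St Ht]] : a r by apply: (regl _ Hs); rewrite H.
  have [u [Su Hu]] := Ar r t St Ht.
  by exists u; split => //; apply: gU; apply: sub0.
- move=> r; split.
    by move=> [s [Hs H]]; apply: (regl _ Hs); rewrite H.
  by move/E0=> [s [Ss H]]; exists s; split => //; apply: gU; apply: sub0.
Qed.

End Aux.

Theorem theorem4p1 (R : pzRingType) (a : rset R) (Ha : in_Ass a) :
  (* (1) *)
  (forall S1 S2 S3 : rset R, Den_a a S1 -> Den_a a S2 -> Den_a a S3 ->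
     [/\ Den_a a (prodDen S1 S2),
         seteq (prodDen S1 S2) (prodDen S2 S1),
         seteq (prodDen (prodDen S1 S2) S3) (prodDen S1 (prodDen S2 S3))
       & subset_of S1 S2 -> subset_of (prodDen S1 S3) (prodDen S2 S3)]) /\
  (* (2) *)
  (Den_a a (S_a a) /\ (forall S, Den_a a S -> subset_of S (S_a a))) /\
  (* (3) *)
  (forall (I : Type) (Sf : I -> rset R), inhabited I ->
     (forall i, Den_a a (Sf i)) ->
     [/\ Den_a a (genFam Sf),
         (forall i, subset_of (Sf i) (genFam Sf))
       & forall T, Den_a a T -> (forall i, subset_of (Sf i) T) ->
           subset_of (genFam Sf) T]).
Proof.
split.
  move=> S1 S2 S3 D1 D2 D3; split.
  - apply: gen_Den_a; last by exists 1; left; apply: den1 D1.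
    move=> x [Hx|Hx].
      by exists S1; split => //; split => // y Hy; left.
    by exists S2; split => //; split => // y Hy; right.
  - by move=> x; split; apply: gen_sub => y Hy; apply: gen_base; case: Hy; auto.
  - move=> x; split; apply: gen_sub => y [Hy|Hy].
    + apply: gen_sub Hy => z [Hz|Hz]; apply: gen_base; first by left.
      by right; apply: gen_base; left.
    + by apply: gen_base; right; apply: gen_base; right.
    + by apply: gen_base; left; apply: gen_base; left.
    + apply: gen_sub Hy => z [Hz|Hz]; apply: gen_base; last by right.
      by left; apply: gen_base; right.
  - by move=> sub; apply: gen_sub => y [Hy|Hy]; apply: gen_base; [left; apply: sub|right].
split.
  have DG : Den_a a (gen (S_a a)).
    apply: gen_Den_a.
      move=> x [S [D Sx]]; exists S; split => //; split => //.
      by move=> y Hy; exists S.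
    case: Ha => S0 [D0 E0]; exists 1; exists S0; split; first by split.
    exact: (den1 (conj D0 E0)).
  split.
    apply: Den_a_ext (DG) => x; split; last exact: gen_base.
    by move=> Hx; exists (gen (S_a a)); split.
  by move=> S D x Sx; exists S.
move=> I Sf [i0] D; split.
- apply: gen_Den_a; last by exists 1; exists i0; apply: den1 (D i0).
  move=> x [i Hx]; exists (Sf i); split => //; split => //.
  by move=> y Hy; exists i.
- by move=> i x Hx; apply: gen_base; exists i.
- move=> T DT sub; apply: gen_closed; last exact: denM DT.
  by move=> x [i Hx]; apply: sub Hx.
Qed.
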